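(* Let $T$ be a tree of order at least $3$, let $T^*$ be the twin-free tree associated to $T$, and let $k\geq 1$ be an integer. Then $\gamma_{B_k}(T)=\gamma_{B_k}(T^* )$.
   Context: $d(u,v)$ denotes the distance in the graph. For a connected graph $G$ and an integer $k\ge 1$, a function $f\colon V(G)\to\{0,1,\dots,k\}$ is a dominating $k$-broadcast on $G$ if for every $u\in V(G)$ there is a vertex $v$ with $f(v)\geq 1$ and $d(u,v)\leq f(v)$. Its cost is $\omega(f)=\sum_{u\in V(G)}f(u)$, and $\gamma_{B_k}(G)$ is the minimum cost of a dominating $k$-broadcast on $G$. A leaf is a vertex of degree one, its unique neighbor is a support vertex, and leaves with the same support vertex are twin leaves. For a tree $T$ of order at least 3, the twin-free tree associated to $T$, denoted $T^*$, is the tree obtained from $T$ by deleting all but one of the leaves of every maximal set of pairwise twin leaves. *)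

(* Defs.v *)
From mathcomp Require Import all_boot.
From mathcomp Require Import boolp.
Set Implicit Arguments. Unset Strict Implicit. Unset Printing Implicit Defensive.

Definition simple_graph (T : finType) (e : rel T) : Prop :=
  symmetric e /\ irreflexive e.

Definition connected_graph (T : finType) (e : rel T) : Prop :=
  forall u v : T, connect e u v.

Definition acyclic_graph (T : finType) (e : rel T) : Prop :=
  forall s : seq T, uniq s -> 3 <= size s -> ~~ cycle e s.

Definition is_tree (T : finType) (e : rel T) : Prop :=
  [/\ simple_graph e, connected_graph e & acyclic_graph e].

Definition dist_le (T : finType) (e : rel T) (v u : T) (n : nat) : Prop :=
  exists p : seq T, [/\ path e v p, last v p = u & size p <= n].

Arguments dist_le : clear implicits.
Definition dom_broadcast (T : finType) (e : rel T) (k : nat)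
    (f : {ffun T -> 'I_k.+1}) : Prop :=
  forall u : T, exists v : T, 1 <= f v /\ dist_le T e v u (f v).

Arguments dom_broadcast {T} e k f.

Definition bcost (T : finType) (k : nat) (f : {ffun T -> 'I_k.+1}) : nat :=
  \sum_(x : T) (f x : nat).

(* gamma_{B_k}(G): the minimum cost of a dominating k-broadcast.  The default
   #|T| of the iterated minimum is harmless for k >= 1 since the constant
   broadcast 1 is dominating with cost #|T|. *)
Definition gammaB (T : finType) (e : rel T) (k : nat) : nat :=
  \big[minn/#|T|]_(f : {ffun T -> 'I_k.+1} | `[< dom_broadcast e k f >]) bcost f.

Definition deg (T : finType) (e : rel T) (v : T) : nat := #|[set u | e v u]|.
Definition is_leaf (T : finType) (e : rel T) (v : T) : bool := deg e v == 1.

(* S is the vertex set of a twin-free tree associated to T: it contains every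
   non-leaf vertex and, for every support vertex s, exactly one leaf adjacent
   to s (every leaf is adjacent to its support vertex). *)
Definition twin_free_set (T : finType) (e : rel T) (S : {set T}) : Prop :=
  (forall v, ~~ is_leaf e v -> v \in S) /\
  (forall s, (exists l, is_leaf e l && e s l) ->
     #|[set l in S | is_leaf e l && e s l]| = 1).

Definition induced (T : finType) (e : rel T) (S : {set T}) : rel {x : T | x \in S} :=
  fun x y => e (val x) (val y).
Arguments induced {T} e S x y.

(* Main.v *)
Require Import Defs.
From mathcomp Require Import all_boot boolp.
Set Implicit Arguments. Unset Strict Implicit. Unset Printing Implicit Defensive.

Lemma bigmin_le (I : finType) (P : pred I) (F : I -> nat) d i :
  P i -> \big[minn/d]_(j | P j) F j <= F i.
Proof.
move=> Pi; have : i \in index_enum I by rewrite mem_index_enum.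
elim: (index_enum I) => // x r IH; rewrite inE big_cons.
case/predU1P => [<-|/IH h]; first by rewrite Pi geq_minl.
by case: (P x) => //; rewrite geq_min h orbT.
Qed.

Lemma bigmin_attained (I : finType) (P : pred I) (F : I -> nat) d i0 :
  P i0 -> F i0 <= d -> exists2 i, P i & \big[minn/d]_(j | P j) F j = F i.
Proof.
move=> Pi0 Fi0.
have : \big[minn/d]_(j | P j) F j = d \/
       exists2 i, P i & \big[minn/d]_(j | P j) F j = F i.
  apply: (big_ind (fun m => m = d \/ exists2 i, P i & m = F i)); first by left.
    move=> x y Hx Hy; case: (leqP x y) => h.
      by [].
    by [].
  by move=> i Pi; right; exists i.
case=> // Hd; exists i0 => //; apply/eqP; rewrite eqn_leq bigmin_le //.
by rewrite Hd.
Qed.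

Section Graph0.
Variables (T : finType) (e : rel T).

Lemma dist_le_mono v u m n : m <= n -> dist_le T e v u m -> dist_le T e v u n.
Proof. by move=> mn [p [hp hl hs]]; exists p; split => //; exact: leq_trans hs mn. Qed.

Lemma optimal_exists k : 1 <= k ->
  exists2 f : {ffun T -> 'I_k.+1}, dom_broadcast e k f & gammaB e k = bcost f.
Proof.
move=> hk.
set f1 : {ffun T -> 'I_k.+1} := [ffun=> Ordinal (hk : 1 < k.+1)].
have h1 : `[< dom_broadcast e k f1 >].
  by apply/asboolP => u; exists u; rewrite ffunE; split => //; exists [::].
have h2 : bcost f1 <= #|T|.
  by rewrite /bcost (eq_bigr (fun _ => 1)) ?sum1_card // => x _; rewrite ffunE.
have [f hf Hf] := @bigmin_attained _ (fun f : {ffun T -> 'I_k.+1} => `[< dom_broadcast e k f >]) (@bcost T k) #|T| f1 h1 h2.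
by exists f => //; apply/asboolP.
Qed.

End Graph0.

Section Graph.
Variables (T : finType) (e : rel T).
Hypotheses (sym : symmetric e) (conn : connected_graph e) (card3 : 3 <= #|T|).

Lemma leaf_nb l : is_leaf e l -> exists s, forall u, e l u = (u == s).
Proof. by rewrite /is_leaf /deg => /cards1P [s Hs]; exists s => u; rewrite -in_set1 -Hs inE. Qed.

Lemma leaf_nb_nonleaf l s : is_leaf e l -> e l s -> ~~ is_leaf e s.
Proof.
move=> hl hls; apply/negP => hs.
have [s0 Hs0] := leaf_nb hl.
have [l0 Hl0] := leaf_nb hs.
have es : s = s0 by apply/eqP; rewrite -Hs0.
have el : l = l0 by apply/eqP; rewrite -Hl0 sym.
have cl : closed e (mem [:: l; s]).
  move=> x y exy; rewrite !inE.
  case: (eqVneq x l) => [xl|xl].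
    by move: exy; rewrite xl Hs0 -es => /eqP ->; rewrite eqxx orbT.
  case: (eqVneq x s) => [xs|xs].
    by move: exy; rewrite xs Hl0 -el => /eqP ->; rewrite eqxx.
  case: (eqVneq y l) => [ey|yl]; first by move: exy; rewrite ey sym Hs0 -es (negbTE xs).
  case: (eqVneq y s) => [ey|ys] //; by move: exy; rewrite ey sym Hl0 -el (negbTE xl).
have : #|T| <= #|[:: l; s]|.
  apply: subset_leq_card; apply/subsetP => x _.
  by rewrite -(closed_connect cl (conn l x)) inE eqxx.
move=> h; have := leq_trans h (card_size _); rewrite /=.
by move=> h2; have := leq_trans card3 h2.
Qed.


Definition HF (k : nat) (F : T -> nat) (x : T) : nat :=
  if is_leaf e x then 0 else minn k (F x + \sum_(l | is_leaf e l && e x l) F l).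

Lemma HF_le k F x : HF k F x <= k.
Proof. by rewrite /HF; case: ifP => // _; rewrite geq_minl. Qed.

Lemma HF_ge_nonleaf k F x : ~~ is_leaf e x -> F x <= k -> F x <= HF k F x.
Proof. by move=> hx hF; rewrite /HF (negbTE hx) leq_min hF leq_addr. Qed.

Lemma HF_ge_nb k F s l : ~~ is_leaf e s -> is_leaf e l -> e s l -> F l <= k ->
  F l <= HF k F s.
Proof.
move=> hs hl esl hF; rewrite /HF (negbTE hs) leq_min hF /=.
apply: leq_trans (leq_addl _ _).
by rewrite (bigD1 l) ?hl ?esl //= leq_addr.
Qed.

Lemma HF_cost k F : \sum_x HF k F x <= \sum_x F x.
Proof.
apply: (@leq_trans (\sum_x ((if is_leaf e x then 0 else F x) +
                            \sum_(l | is_leaf e l && e x l) F l))).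
  apply: leq_sum => x _; rewrite /HF; case: ifP => _ //; exact: geq_minr.
rewrite big_split /=.
rewrite (exchange_big_dep (fun l => is_leaf e l)) /=; last by move=> i j _ /andP[].
rewrite [X in _ <= X](bigID (fun x => is_leaf e x)) /= addnC.
apply: leq_add.
  apply: leq_sum => l hl.
  rewrite (eq_bigl (fun x => x \in [set x | e l x])); last first.
    by move=> x; rewrite inE hl sym.
  rewrite sum_nat_const.
  by move: hl; rewrite /is_leaf /deg => /eqP ->; rewrite mul1n.
rewrite [X in _ <= X]big_mkcond /=; apply: leq_sum => x _.
by case: (is_leaf e x).
Qed.

Lemma shift w s u r : is_leaf e w -> e w s -> 1 <= r -> dist_le T e w u r ->
  dist_le T e s u r.
Proof.
move=> hw ews hr [[|x p] [/= hp hl hs]].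
  by exists [:: w]; split => //=; rewrite sym ews.
have [s0 Hs0] := leaf_nb hw.
move/andP: hp => [ewx hp].
have xs : x = s by move: ewx ews; rewrite !Hs0 => /eqP -> /eqP ->.
by exists p; split => //; [rewrite -xs | rewrite -xs | apply: leq_trans hs].
Qed.

Lemma key k F w u : (forall x, F x <= k) -> 1 <= F w -> dist_le T e w u (F w) ->
  exists v, [/\ ~~ is_leaf e v, F w <= HF k F v & dist_le T e v u (F w)].
Proof.
move=> Fk hw hd.
case: (boolP (is_leaf e w)) => wl; last first.
  by exists w; split => //; apply: HF_ge_nonleaf.
have [s Hs] := leaf_nb wl.
have ews : e w s by rewrite Hs.
have sl := leaf_nb_nonleaf wl ews.
exists s; split => //.
  by apply: HF_ge_nb => //; rewrite sym.
exact: shift ews hw hd.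
Qed.


Section Sub.
Variables (S : {set T}) (hS : forall v, ~~ is_leaf e v -> v \in S).

Lemma shorten n p v : size p <= n -> v \in S -> path e v p -> last v p \in S ->
  exists q, [/\ path e v q, last v q = last v p, size q <= size p & all (mem S) q].
Proof.
elim: n p v => [|n IH] p v hn hv hp hl.
  by move: hn; rewrite leqn0 => /nilP ->; exists [::].
case: (boolP (all (mem S) p)) => [hall|]; first by exists p.
rewrite -has_predC => /hasP [x xp xnS].
have xl : is_leaf e x by apply: contraR xnS => /hS.
case/splitPr: xp hn hp hl => p1 p2.
rewrite cat_path last_cat /= => hn /and3P [hp1 elx hp2].
case: p2 hn hp2 => [|b p3] hn hp2 /= hl; first by move: xnS; rewrite /= hl.
move/andP: hp2 => [exb hp3].
have [s0 Hs0] := leaf_nb xl.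
have hb : b = s0 by apply/eqP; rewrite -Hs0.
have hlast : last v p1 = s0 by apply/eqP; rewrite -Hs0 sym.
have h1 : size (p1 ++ p3) <= n.
  by move: hn; rewrite !size_cat /= !addnS ltnS => /ltnW.
have h2 : path e v (p1 ++ p3) by rewrite cat_path hp1 hlast -hb.
have h3 : last v (p1 ++ p3) \in S by rewrite last_cat hlast -hb.
have [q [hq1 hq2 hq3 hq4]] := IH (p1 ++ p3) v h1 hv h2 h3.
exists q; split => //.
  by rewrite hq2 last_cat hlast -hb.
apply: leq_trans hq3 _; rewrite !size_cat /= leq_add2l.
exact: leq_trans (leqnSn _) (leqnSn _).
Qed.

Local Notation sT := {x : T | x \in S}.

Lemma lift_walk (y z : sT) n : dist_le sT (induced e S) y z n ->
  dist_le T e (val y) (val z) n.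
Proof.
move=> [r [hr hl hs]]; exists (map val r).
by rewrite path_map last_map size_map hl.
Qed.

Lemma push_walk (y : sT) q : all (mem S) q -> path e (val y) q ->
  exists r : seq sT, map val r = q /\ path (induced e S) y r.
Proof.
elim: q y => [|x q IH] y /=; first by exists [::].
move=> /andP [hx hall] /andP [eyx hq].
have [r [hr1 hr2]] := IH (exist _ x hx) hall hq.
by exists (exist _ x hx :: r); split; [rewrite /= hr1 | rewrite /= hr2 andbT].
Qed.

End Sub.

Section Dir.
Variables (S : {set T}) (k : nat) (hk : 1 <= k) (hS : forall v, ~~ is_leaf e v -> v \in S)
  (htw : forall s, (exists l, is_leaf e l && e s l) ->
     #|[set l in S | is_leaf e l && e s l]| = 1).

Local Notation sT := {x : T | x \in S}.

Lemma dirB : gammaB (induced e S) k <= gammaB e k.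
Proof.
have [f hf ->] := optimal_exists e hk.
pose F x := nat_of_ord (f x).
have Fk : forall x, F x <= k by move=> x; rewrite -ltnS ltn_ord.
pose h : {ffun sT -> 'I_k.+1} := [ffun y => inord (HF k F (val y))].
have hE : forall y, (h y : nat) = HF k F (val y).
  by move=> y; rewrite ffunE inordK // ltnS HF_le.
apply: (@leq_trans (bcost h)).
  apply: bigmin_le; apply/asboolP => y.
  have [w [hw1 hw2]] := hf (val y).
  have [v [vl hv hd]] := key Fk hw1 hw2.
  have vS := hS vl.
  move: hd => [p [hp hpl hps]].
  have hlS : last v p \in S by rewrite hpl (valP y).
  have [q [hq1 hq2 hq3 hq4]] := shorten hS (leqnn _) vS hp hlS.
  have [r [hr1 hr2]] := @push_walk S (exist _ v vS) q hq4 hq1.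
  exists (exist _ v vS); rewrite hE /=; split; first exact: leq_trans hw1 hv.
  exists r; split => //.
    apply: val_inj; rewrite -[val (last _ _)]/(val (last (exist _ v vS) r)).
    by rewrite -(last_map val) hr1 hq2 hpl.
  by rewrite -(size_map val) hr1; apply: leq_trans hv; apply: leq_trans hps.
rewrite /bcost (eq_bigr (fun y => HF k F (val y))); last by move=> y _; rewrite hE.
rewrite -(big_sub S (fun x => HF k F x)).
apply: leq_trans (HF_cost k F).
rewrite big_mkcond; apply: leq_sum => x _.
by case: (x \in S).
Qed.


Lemma dirA : gammaB e k <= gammaB (induced e S) k.
Proof.
have [fs hf ->] := optimal_exists (induced e S) hk.
pose F x := if insub x is Some y then nat_of_ord (fs y) else 0.
have Fval : forall y : sT, F (val y) = fs y by move=> y; rewrite /F valK.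
have Fk : forall x, F x <= k.
  by move=> x; rewrite /F; case: insub => // y; rewrite -ltnS ltn_ord.
pose g : {ffun T -> 'I_k.+1} := [ffun x => inord (HF k F x)].
have gE : forall x, (g x : nat) = HF k F x.
  by move=> x; rewrite ffunE inordK // ltnS HF_le.
apply: (@leq_trans (bcost g)).
  apply: bigmin_le; apply/asboolP => u.
  have fin : forall w, 1 <= F w -> dist_le T e w u (F w) ->
      exists v, 1 <= g v /\ dist_le T e v u (g v).
    move=> w hw hd; have [v [vl hv hd2]] := key Fk hw hd.
    exists v; rewrite gE; split; first exact: leq_trans hw hv.
    exact: dist_le_mono hv hd2.
  case: (boolP (u \in S)) => hu.
    have [y [hy1 hy2]] := hf (exist _ u hu).
    apply: (fin (val y)); rewrite Fval //.
    exact: (lift_walk hy2).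
  have ul : is_leaf e u by apply: contraR hu => /hS.
  have [s Hs] := leaf_nb ul.
  have eus : e u s by rewrite Hs.
  have sl := leaf_nb_nonleaf ul eus.
  have : #|[set l in S | is_leaf e l && e s l]| = 1.
    by apply: htw; exists u; rewrite ul sym eus.
  move/eqP/cards1P => [l' Hl'].
  have : l' \in [set l in S | is_leaf e l && e s l] by rewrite Hl' set11.
  rewrite inE => /and3P [l'S l'l esl'].
  have [y [hy1 hy2]] := hf (exist _ l' l'S).
  have := lift_walk hy2; rewrite /= => -[p [hp hpl hps]].
  case/lastP: p hp hpl hps => [|q x] hp hpl hps.
    exists s; rewrite gE; split.
      apply: leq_trans hy1 _; rewrite -Fval; move: hpl => /= ->; exact: HF_ge_nb.
    apply: (dist_le_mono (m:=1)).
      apply: leq_trans hy1 _; rewrite -Fval; move: hpl => /= ->; exact: HF_ge_nb.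
    by exists [:: u]; split => //=; rewrite sym eus.
  apply: (fin (val y)); rewrite Fval //.
  move: hp hpl; rewrite rcons_path last_rcons => /andP [hq elast] hx.
  have [l0 Hl0] := leaf_nb l'l.
  have hlast : last (val y) q = s.
    move: elast esl'; rewrite hx sym Hl0 sym Hl0 => /eqP -> /eqP ->. done.
  exists (rcons q u); split.
  - by rewrite rcons_path hq hlast sym eus.
  - by rewrite last_rcons.
  - by move: hps; rewrite !size_rcons.
rewrite /bcost (eq_bigr (fun x => HF k F x)); last by move=> x _; rewrite gE.
apply: leq_trans (HF_cost k F) _.
rewrite (eq_bigr (fun y : sT => F (val y))); last by move=> y _; rewrite Fval.
rewrite -(big_sub S F) [X in _ <= X]big_mkcond; apply: leq_sum => x _.
by case: ifP => // hx; rewrite /F insubF.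
Qed.

End Dir.

Theorem main (S : {set T}) (k : nat) :
  1 <= k -> twin_free_set e S -> gammaB e k = gammaB (induced e S) k.
Proof.
move=> hk [hS htw]; apply/eqP; rewrite eqn_leq.
by rewrite (dirA hk hS htw) (dirB hk hS).
Qed.

End Graph.

Theorem proposition2 (T : finType) (e : rel T) (S : {set T}) (k : nat) :
  is_tree e -> 3 <= #|T| -> 1 <= k -> twin_free_set e S ->
  gammaB e k = gammaB (induced e S) k.
Proof.
move=> [[sym _] conn _] card3; exact: main.
Qed.
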